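(* Let $L$ be an $n\times n$ nonsingular M-matrix with integer entries. If $c\in\mathbb{Z}^n$ is a critical configuration of $L$, then $D^L-c$ is $z$-superstable with respect to $L$.
   Context: A Z-matrix is a square real matrix whose off-diagonal entries are all $\le 0$. A nonsingular M-matrix is a Z-matrix $L$ that is invertible with $L^{-1}$ having all entries nonnegative (its diagonal entries are then positive). Vector inequalities are entrywise; $e_i$ is the $i$th standard basis vector. A vector $f\in\mathbb{Z}^n$ with $f\ge0$ is $z$-superstable if for every $z\in\mathbb{Z}^n$ with $z\ge0$, $z\ne0$, there is $i$ with $f_i-(Lz)_i<0$. $D^L\in\mathbb{Z}^n$ is defined by $D^L_i=L_{ii}-1$. A vector $c\in\mathbb{Z}^n$ is stable if $c_i<L_{ii}$ for all $i$. A vector $c\in\mathbb{Z}^n$ is a critical configuration if it is stable and there exist $g\in\mathbb{Z}^n$ with $g_i\ge L_{ii}$ for all $i$ and indices $i_1,\dots,i_k$ such that $c=g-\sum_{j=1}^kLe_{i_j}$ and, writing $g^\ell=g-\sum_{j=1}^\ell Le_{i_j}$ ($g^0=g$), one has $g^\ell_{i_{\ell+1}}\ge L_{i_{\ell+1}i_{\ell+1}}$ for all $0\le\ell<k$. *)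

(* Defs.v *)
From HB Require Import structures.
From mathcomp Require Import all_boot all_order all_algebra.
Set Implicit Arguments. Unset Strict Implicit. Unset Printing Implicit Defensive.
Import Order.TTheory GRing.Theory Num.Theory.
Local Open Scope ring_scope.

Definition Zmatrix (n : nat) (L : 'M[int]_n) : Prop :=
  forall i j : 'I_n, i != j -> L i j <= 0.

Definition nonsingular_Mmatrix (n : nat) (L : 'M[int]_n) : Prop :=
  let LQ := map_mx (intr : int -> rat) L in
  Zmatrix L /\ LQ \in unitmx /\ (forall i j : 'I_n, 0 <= invmx LQ i j).

Definition Le (n : nat) (L : 'M[int]_n) (i : 'I_n) : 'cV[int]_n := L *m delta_mx i 0.

Definition DL (n : nat) (L : 'M[int]_n) : 'cV[int]_n := \col_i (L i i - 1).

Definition stable (n : nat) (L : 'M[int]_n) (c : 'cV[int]_n) : Prop :=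
  forall i : 'I_n, c i 0 < L i i.

Fixpoint legal_fire (n : nat) (L : 'M[int]_n) (g : 'cV[int]_n) (s : seq 'I_n)
  : option 'cV[int]_n :=
  match s with
  | [::] => Some g
  | i :: s' => if L i i <= g i 0 then legal_fire L (g - Le L i) s' else None
  end.

Definition critical (n : nat) (L : 'M[int]_n) (c : 'cV[int]_n) : Prop :=
  stable L c /\
  exists (g : 'cV[int]_n) (s : seq 'I_n),
    (forall i : 'I_n, L i i <= g i 0) /\ legal_fire L g s = Some c.

Definition z_superstable (n : nat) (L : 'M[int]_n) (f : 'cV[int]_n) : Prop :=
  (forall i : 'I_n, 0 <= f i 0) /\
  forall z : 'cV[int]_n, (forall i, 0 <= z i 0) -> z != 0 ->
    exists i : 'I_n, f i 0 - (L *m z) i 0 < 0.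

(* Main.v *)
Require Import Defs.
From HB Require Import structures.
From mathcomp Require Import all_boot all_order all_algebra.
From mathcomp Require Import zify.
Set Implicit Arguments. Unset Strict Implicit.
Import Order.TTheory GRing.Theory Num.Theory.
Local Open Scope ring_scope.

Definition cnt (n : nat) (s : seq 'I_n) : 'cV[int]_n :=
  \sum_(i <- s) delta_mx i 0.

Lemma fire_eq (n : nat) (L : 'M[int]_n) s : forall h c,
  legal_fire L h s = Some c -> c = h - L *m cnt s.
Proof.
elim: s => [|i s IH] h c /=.
  by case=> <-; rewrite /cnt big_nil mulmx0 subr0.
case: ifP => // _ /IH ->.
by rewrite /cnt big_cons mulmxDr /Le opprD addrA.
Qed.

Lemma inv_lem (n : nat) (L : 'M[int]_n) (T : 'cV[int]_n) (c : 'cV[int]_n) :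
  Zmatrix L -> (forall i, T i 0 < L i i) ->
  forall (s : seq 'I_n) (h u : 'cV[int]_n), (forall i, 0 <= u i 0) -> h - L *m u = T ->
  legal_fire L h s = Some c ->
  exists u' : 'cV[int]_n, (forall i, 0 <= u' i 0) /\ c - L *m u' = T.
Proof.
move=> HZ HT; elim=> [|i s IH] h u Hu Hh /=.
  by case=> <-; exists u.
case: ifP => // Hfi Hf.
have Hui : 1 <= u i 0.
  case: (lerP 1 (u i 0)) => // H1.
  have Hu0 : u i 0 = 0 by have := Hu i; lia.
  have Hs : (L *m u) i 0 <= 0.
    rewrite mxE; apply: sumr_le0 => j _.
    case: (eqVneq i j) => [<-|Hij]; first by rewrite Hu0 mulr0.
    by rewrite mulr_le0_ge0 // HZ.
  have : h i 0 = T i 0 + (L *m u) i 0.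
    by rewrite -Hh !mxE subrK.
  move=> Hhi; have Hle : h i 0 <= T i 0 by rewrite Hhi gerDl.
  by have := le_lt_trans Hfi (le_lt_trans Hle (HT i)); rewrite ltxx.
apply: (IH (h - Le L i) (u - delta_mx i 0)) => //.
  by move=> j; rewrite !mxE andbT; case: eqP => [->|_] /=; rewrite ?subr0 ?Hu // ?subr_ge0.
  rewrite /Le mulmxDr mulmxN opprD opprK addrA addrAC subrK; exact: Hh.
Qed.

Lemma h1 (a b : int) : b < a -> 0 <= a - 1 - b. Proof. lia. Qed.
Lemma h2 (a b d : int) : 0 <= a - 1 - b - d -> b + d < a. Proof. lia. Qed.
Lemma h3 (a b g : int) : a <= g -> b < a -> 0 <= g - b. Proof. lia. Qed.
Lemma h4 (a b : int) : 0 <= a -> 0 <= b -> a + b = 0 -> b = 0. Proof. lia. Qed.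

Theorem mainTheorem13 (n : nat) (L : 'M[int]_n) (c : 'cV[int]_n) :
  nonsingular_Mmatrix L -> critical L c -> z_superstable L (DL L - c).
Proof.
move=> [HZ [Hunit Hinv]] [Hst [g [s [Hg Hf]]]].
split.
  by move=> i; rewrite !mxE; apply: h1 (Hst i).
move=> z Hz Hz0.
case: (boolP [exists i, (DL L - c) i 0 - (L *m z) i 0 < 0]) => [/existsP//|/existsPn Hno].
exfalso.
pose T := c + L *m z.
have HT : forall i, T i 0 < L i i.
  by move=> i; move: (Hno i); rewrite -leNgt !mxE; apply: h2.
have Hc := fire_eq Hf.
pose u0 := cnt s - z.
have Hu0e : g - L *m u0 = T.
  by rewrite /T Hc /u0 mulmxDr mulmxN opprD opprK addrA.
set LQ := map_mx (intr : int -> rat) L.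
have Hu0 : forall i, 0 <= u0 i 0.
  have HLu : forall i, 0 <= (L *m u0) i 0.
    have -> : L *m u0 = g - T by rewrite -Hu0e opprD opprK addrA subrr add0r.
    move=> i; rewrite (_ : (g - T) i 0 = g i 0 - T i 0); [exact: h3 (Hg i) (HT i) | by rewrite !mxE].
  move=> i.
  have E : map_mx (intr : int -> rat) u0 = invmx LQ *m (LQ *m map_mx intr u0)
    by rewrite mulKmx.
  have : 0 <= (map_mx (intr : int -> rat) u0) i 0.
    rewrite E /LQ -map_mxM mxE; apply: sumr_ge0 => k _; apply: mulr_ge0.
      exact: Hinv.
    by rewrite mxE ler0z.
  by rewrite mxE ler0z.
have [u' [Hu' Hu'e]] := inv_lem HZ HT Hu0 Hu0e Hf.
have Hw : L *m (u' + z) = 0.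
  by rewrite mulmxDr -(addrI _ Hu'e) subrr.
have Hw0 : map_mx (intr : int -> rat) (u' + z) = 0.
  by rewrite -(mulKmx Hunit (map_mx intr (u' + z))) /LQ -map_mxM Hw map_mx0 mulmx0.
move/eqP: Hz0; apply; apply/matrixP => i j; rewrite (ord1 j) mxE.
have := congr1 (fun M : 'cV[rat]_n => M i 0) Hw0; rewrite !mxE => /eqP; rewrite intr_eq0 => /eqP.
exact: h4 (Hu' i) (Hz i).
Qed.
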